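(* Let $h\ge r$ be positive integers and let $0<\beta<1$ be a real. There is a positive real $\alpha$ depending on $h,r,\beta$ such that the following holds. Let $G$ be any graph on $n$ vertices and let $p=p_r(G)$. For $i,j\in[h]$ let $\mathcal{A}_{i,j}$ denote the set of $i$-good sequences of length $j$ relative to $(\alpha,\beta,h,r)$ in $V(G)$. Then for each $i\in[h]$ and $r\le j\le h$, \[\sum_{S\in\mathcal{A}_{i,j}}|N(S)|^r\geq (1-\beta)\,n^{j+r}p^{jr}.\] In particular, there exists an $i$-good sequence $S$ of length $j$ such that $|N(S)|\ge(1-\beta)^{1/r}p^j n$.
   Context: All graphs are finite and simple. For a positive integer $r$, $p_r(G)=t_{K_{1,r}}(G)^{1/r}=\frac1n\left(\frac1n\sum_{v\in V(G)}d(v)^r\right)^{1/r}$ where $n=|G|$. A sequence in a set $W$ is a finite sequence of elements of $W$ (repetitions allowed); its length $|S|$ counts multiplicity; $W^k$ denotes the set of sequences of length $k$ in $W$. For a sequence $S$ in $V(G)$, $N(S)$ is the set of vertices adjacent to every vertex of $S$. Goodness: fix reals $0<\alpha,\beta<1$ and positive integers $h,r$, and let $p=p_r(G)$. A sequence $T$ in $V(G)$ is $0$-good if $|N(T)|\ge\alpha p^{|T|}n$. For $1\le i\le h$, a sequence $S$ in $V(G)$ of length at most $h$ is $i$-good if $S$ is $0$-good and for each $|S|\le k\le h$, the number of $(i-1)$-good sequences in $N(S)^k$ is at least $(1-\beta)|N(S)|^k$. These are called $i$-good relative to $(\alpha,\beta,h,r)$. *)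

(* Defs.v *)
From HB Require Import structures.
From mathcomp Require Import all_boot all_order all_algebra.
From mathcomp Require Import reals exp.
Set Implicit Arguments. Unset Strict Implicit. Unset Printing Implicit Defensive.
Import Order.TTheory GRing.Theory Num.Theory.
Local Open Scope ring_scope.

(* A finite simple graph: vertex set T (a finType), adjacency e : rel T,
   assumed symmetric and irreflexive in the theorem. *)

Definition deg (T : finType) (e : rel T) (v : T) : nat := #|[set u | e v u]|.

Definition p_r (R : realType) (T : finType) (e : rel T) (r : nat) : R :=
  (#|T|%:R)^-1 *
  powR ((#|T|%:R)^-1 * \sum_(v : T) (deg e v)%:R ^+ r) (r%:R^-1).

Definition nbhd (T : finType) (e : rel T) (S : seq T) : {set T} :=
  [set v | all (fun u => e u v) S].

Fixpoint good (R : realType) (T : finType) (e : rel T)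
    (alpha beta : R) (h r : nat) (i : nat) (S : seq T) : bool :=
  let p := p_r R e r in
  let zero_good := alpha * p ^+ size S * (#|T|%:R) <= (#|nbhd e S|)%:R in
  match i with
  | 0 => zero_good
  | i'.+1 =>
      [&& (size S <= h)%N, zero_good &
        [forall k : 'I_h.+1, (size S <= k)%N ==>
          ((1 - beta) * (#|nbhd e S|%:R) ^+ k <=
           (#|[set t : k.-tuple T |
                 all (fun x => x \in nbhd e S) t &&
                 good e alpha beta h r i' t]|)%:R)]]
  end.

(* Main.v *)
Require Import Defs.
From HB Require Import structures.
From mathcomp Require Import all_boot all_order all_algebra.
From mathcomp Require Import reals exp.
From mathcomp Require Import ring lra zify.
Import Order.TTheory GRing.Theory Num.Theory.
Local Open Scope ring_scope.
Set Implicit Arguments. Unset Strict Implicit. Unset Printing Implicit Defensive.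

Lemma card_tuples_in (T : finType) (A : {set T}) k :
  #|[set t : k.-tuple T | all (fun x => x \in A) t]| = (#|A| ^ k)%N.
Proof.
pose sT := {x : T | x \in A}.
have -> : [set t : k.-tuple T | all (fun x => x \in A) t] =
          [set map_tuple val t | t : k.-tuple sT].
  apply/setP => t; rewrite inE; apply/idP/imsetP.
  - move=> Ht.
    have Hs : size (pmap (insub : T -> option sT) t) == k.
      by rewrite size_pmap_sub; move: Ht; rewrite all_count => /eqP ->; rewrite size_tuple.
    exists (Tuple Hs) => //; apply: val_inj => /=.
    rewrite (pmap_filter (@insubK _ _ sT)).
    apply/esym/all_filterP; apply: sub_all Ht => x /= Hx; by rewrite insubT.
  - case=> u _ ->; apply/allP => x /mapP [y _ ->]; exact: (valP y).
rewrite card_imset; last first.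
  move=> u v /(congr1 val) /= H; apply: val_inj; exact: (inj_map val_inj H).
rewrite (card_tuple k sT) card_sig; congr (_ ^ _)%N; apply: eq_card => x; by rewrite !inE.
Qed.

Lemma card_setE (U : finType) (Q : pred U) :
  #|[set x | Q x]| = (\sum_(x : U) (Q x : nat))%N.
Proof.
rewrite -sum1_card big_mkcond /=; apply: eq_bigr => x _; rewrite inE; by case: (Q x).
Qed.

Section Graph.
Variable T : finType.
Variable e : rel T.
Hypothesis esym : symmetric e.

Lemma nbhd_all (S t : seq T) :
  all (fun x => x \in nbhd e S) t = all (fun x => x \in nbhd e t) S.
Proof.
apply/allP/allP => H x Hx; rewrite inE; apply/allP => y Hy.
- by move: (H y Hy); rewrite inE => /allP /(_ x Hx); rewrite esym.
- by move: (H y Hy); rewrite inE => /allP /(_ x Hx); rewrite esym.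
Qed.

Lemma swap_nat j k (P : pred (k.-tuple T)) :
  (\sum_(S : j.-tuple T) #|[set t : k.-tuple T | all (fun x => x \in nbhd e S) t && P t]|
  = \sum_(t : k.-tuple T | P t) #|nbhd e t| ^ j)%N.
Proof.
under eq_bigr => S _ do rewrite card_setE.
rewrite exchange_big /= [RHS]big_mkcond /=; apply: eq_bigr => t _.
case: (P t) => /=; last by rewrite big1 // => S _; rewrite andbF.
rewrite -card_tuples_in card_setE; apply: eq_bigr => S _.
by rewrite andbT nbhd_all.
Qed.

Lemma swap (R : realType) j k (P : pred (k.-tuple T)) :
  \sum_(S : j.-tuple T) (#|[set t : k.-tuple T | all (fun x => x \in nbhd e S) t && P t]|)%:R
  = \sum_(t : k.-tuple T | P t) (#|nbhd e t|%:R : R) ^+ j.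
Proof.
rewrite -natr_sum swap_nat natr_sum; apply: eq_bigr => t _; by rewrite natrX.
Qed.
End Graph.


Lemma cheb (R : realDomainType) (I : finType) (x : I -> R) a :
  (forall i, 0 <= x i) ->
  (\sum_i x i ^+ a) * (\sum_i x i) <= #|I|%:R * \sum_i x i ^+ a.+1.
Proof.
move=> x0.
pose f u v := x u ^+ a.+1 - x u ^+ a * x v.
have E : #|I|%:R * \sum_i x i ^+ a.+1 - (\sum_i x i ^+ a) * (\sum_i x i)
         = \sum_u \sum_v f u v.
  rewrite mulr_suml mulr_sumr -sumrB; apply: eq_bigr => u _.
  rewrite sumrB sumr_const -mulr_natl mulr_sumr.
  congr (_ - _).
  by rewrite mulr1 mulr_natl.
have H : 0 <= \sum_u \sum_v f u v.
  have S : (\sum_u \sum_v f u v) *+ 2 = \sum_u \sum_v (f u v + f v u).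
    rewrite mulr2n [X in _ + X = _]exchange_big -big_split /=.
    by apply: eq_bigr => u _; rewrite -big_split.
  rewrite -(pmulrn_lge0 _ (isT : (0 < 2)%N)) S.
  apply: sumr_ge0 => u _; apply: sumr_ge0 => v _.
  rewrite /f.
  have -> : x u ^+ a.+1 - x u ^+ a * x v + (x v ^+ a.+1 - x v ^+ a * x u)
     = (x u ^+ a - x v ^+ a) * (x u - x v) by rewrite !exprS; ring.
  have [le|le] := lerP (x u) (x v).
  - apply: mulr_le0; rewrite subr_le0 //; by rewrite lerXn2r // nnegrE.
  - apply: mulr_ge0; rewrite subr_ge0; last exact: ltW.
    by rewrite lerXn2r // ?nnegrE //; exact: ltW.
by rewrite -subr_ge0 E.
Qed.

Lemma power_mean (R : realDomainType) (I : finType) (x : I -> R) a :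
  (forall i, 0 <= x i) ->
  (\sum_i x i) ^+ a.+1 <= #|I|%:R ^+ a * \sum_i x i ^+ a.+1.
Proof.
move=> x0; elim: a => [|a IH]; first by rewrite expr0 mul1r.
have s0 : 0 <= \sum_i x i by apply: sumr_ge0.
rewrite exprSr.
apply: (le_trans (ler_wpM2r s0 IH)).
rewrite -mulrA exprSr -mulrA; apply: ler_wpM2l; first by rewrite exprn_ge0.
exact: cheb.
Qed.


Lemma natid1 m d j : (m + d + j = d + (j + m))%N. Proof. lia. Qed.
Lemma natid2 m d j : ((m + d) * j = j * d + j * m)%N. Proof. lia. Qed.

Lemma natid3 r j : (r * j + (j.+1 + r) = r.+1 * j.+1)%N. Proof. lia. Qed.

Section Main.
Variable R : realType.
Variable T : finType.
Variable e : rel T.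
Variables (alpha beta : R) (h r : nat).

Local Notation nn := (#|T|%:R : R).
Local Notation pp := (p_r R e r).
Local Notation xx S := (#|nbhd e S|%:R : R).

Definition Claim i (eps : R) := forall j m, (1 <= m)%N -> (m <= j)%N -> (j <= h)%N ->
  \sum_(S : j.-tuple T | ~~ good e alpha beta h r i S) xx S ^+ m
    <= eps * nn ^+ (j + m) * pp ^+ (j * m).

Lemma p_ge0 : 0 <= pp.
Proof. rewrite /p_r; apply: mulr_ge0; [by rewrite invr_ge0 | exact: powR_ge0]. Qed.


Lemma sum_const_tuples j (c : R) : \sum_(S : j.-tuple T) c = nn ^+ j * c.
Proof.
rewrite sumr_const (_ : #|_| = #|{: j.-tuple T}|); last by apply: eq_card.
by rewrite card_tuple -[LHS]mulr_natr natrX mulrC.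
Qed.

Lemma base : 0 <= alpha -> alpha <= 1 -> Claim 0 alpha.
Proof.
move=> a0 a1 j m m1 mj jh.
have p0 := p_ge0.
have n0 : 0 <= nn by [].
set c := alpha * pp ^+ (j * m) * nn ^+ m.
apply: (@le_trans _ _ (\sum_(S : j.-tuple T) c)).
  rewrite big_mkcond /=; apply: ler_sum => S _.
  case: ifP => H; last by rewrite /c !mulr_ge0 // exprn_ge0.
  move: H; rewrite /= size_tuple -ltNge => H.
  apply: (@le_trans _ _ ((alpha * pp ^+ j * nn) ^+ m)).
    rewrite lerXn2r // ?nnegrE //; last exact: ltW.
    by rewrite !mulr_ge0 // exprn_ge0.
  rewrite [(_ * _ * _) ^+ m]exprMn [(_ * _) ^+ m]exprMn -exprM /c.
  apply: ler_wpM2r; first by rewrite exprn_ge0.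
  apply: ler_wpM2r; first by rewrite exprn_ge0.
  case: m m1 {mj c} => // m _; rewrite exprS; apply: ler_piMr => //; exact: exprn_ile1.
rewrite sum_const_tuples /c exprD.
by rewrite [X in X <= _](_ : _ = alpha * (nn ^+ j * nn ^+ m) * pp ^+ (j * m)) //; ring.
Qed.

Lemma thr (y L : R) m d : 0 <= y -> 0 < L -> y ^+ m <= L ^+ m + y ^+ (m + d) / L ^+ d.
Proof.
move=> y0 L0.
have Ld : 0 < L ^+ d by rewrite exprn_gt0.
have ymd : 0 <= y ^+ (m + d) by rewrite exprn_ge0.
have Lm : 0 <= L ^+ m by rewrite exprn_ge0 // ltW.
have [yL|Ly] := lerP y L.
  apply: ler_wpDr; first by rewrite divr_ge0 // ltW.
  by rewrite lerXn2r // nnegrE ltW.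
apply: ler_wpDl => //.
rewrite exprD ler_pdivlMr //.
apply: ler_wpM2l; first by rewrite exprn_ge0.
by rewrite lerXn2r // ?nnegrE ltW.
Qed.

Lemma pow_le_self (d : R) s : 0 <= d -> d <= 1 -> (0 < s)%N -> d ^+ s <= d.
Proof.
move=> d0 d1; case: s => // s _; rewrite exprS; apply: ler_piMr => //; exact: exprn_ile1.
Qed.

Lemma cnt_split i k (A : {set T}) :
  (#|[set t : k.-tuple T | all (fun y => y \in A) t && good e alpha beta h r i t]|
  + #|[set t : k.-tuple T | all (fun y => y \in A) t && ~~ good e alpha beta h r i t]|
  = #|A| ^ k)%N.
Proof.
rewrite -card_tuples_in !card_setE -big_split; apply: eq_bigr => t _.
by case: (all _ _); case: (good _ _ _ _ _ _ _).
Qed.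

Lemma not_good_succ i (S : seq T) : (size S <= h)%N ->
  ~~ good e alpha beta h r i.+1 S ->
  ~~ good e alpha beta h r 0 S \/
  exists k : 'I_h.+1, (size S <= k)%N && ~~ ((1 - beta) * xx S ^+ k <=
     (#|[set t : k.-tuple T | all (fun y => y \in nbhd e S) t &&
          good e alpha beta h r i t]|)%:R).
Proof.
move=> sh; rewrite /= sh /=.
case: (_ <= _) => /=; last by left.
move/forallPn => [k]; rewrite negb_imply => H; right; by exists k.
Qed.

Definition gfun (t : R) := beta * (t / (4 * h.+1)%:R) ^+ h.+1.

Hypothesis esym : symmetric e.
Hypothesis ppos : 0 < pp.

Lemma npos : 0 < nn.
Proof.
rewrite ltr0n lt0n; apply/eqP => H; move: ppos; by rewrite /p_r H invr0 mul0r ltxx.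
Qed.

Lemma step i t : 0 < t -> t <= 1 -> alpha <= t / 2 -> 0 <= alpha -> alpha <= 1 ->
  0 < beta -> Claim i (gfun t) -> Claim i.+1 t.
Proof.
move=> t0 t1 at2 a0 a1 b0 IH j m m1 mj jh.
have n0 := npos.
set Q := nn ^+ (j + m) * pp ^+ (j * m).
have Q0 : 0 <= Q by rewrite mulr_ge0 // exprn_ge0 // ltW.
set dl := t / (4 * h.+1)%:R.
have dl0 : 0 < dl by rewrite divr_gt0 // ltr0n muln_gt0.
have dl1 : dl <= 1.
  rewrite /dl ler_pdivrMr ?ltr0n ?muln_gt0 // mul1r; apply: (le_trans t1).
  by rewrite ler1n muln_gt0.
set bad0 := fun S : j.-tuple T => ~~ good e alpha beta h r 0 S.
set cnd := fun (k : 'I_h.+1) (S : j.-tuple T) => (j <= k)%N && ~~ ((1 - beta) * xx S ^+ k <=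
     (#|[set t : k.-tuple T | all (fun y => y \in nbhd e S) t &&
          good e alpha beta h r i t]|)%:R).
have E1 : \sum_(S : j.-tuple T | ~~ good e alpha beta h r i.+1 S) xx S ^+ m <=
   \sum_(S : j.-tuple T | bad0 S) xx S ^+ m +
   \sum_(k < h.+1) \sum_(S : j.-tuple T | cnd k S) xx S ^+ m.
  rewrite big_mkcond [X in _ <= X + _]big_mkcond.
  under [X in _ <= _ + X]eq_bigr => k _ do rewrite big_mkcond.
  rewrite [X in _ <= _ + X]exchange_big -big_split /=; apply: ler_sum => S _.
  have xm : 0 <= xx S ^+ m by rewrite exprn_ge0.
  have sp : 0 <= \sum_(k < h.+1) (if cnd k S then xx S ^+ m else 0).
    by apply: sumr_ge0 => k _; case: ifP.
  case: ifP => // Hg; last first.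
    by apply: addr_ge0 => //; case: ifP.
  have sS : (size S <= h)%N by rewrite size_tuple.
  have [Hb|[k Hk]] := not_good_succ sS Hg.
    rewrite /bad0 Hb; exact: ler_wpDr.
  rewrite (bigD1 k) //=.
  have -> : cnd k S by rewrite /cnd -{1}(size_tuple S).
  have : 0 <= \sum_(i0 < h.+1 | i0 != k) (if cnd i0 S then xx S ^+ m else 0).
    by apply: sumr_ge0 => k' _; case: ifP.
  have : 0 <= (if bad0 S then xx S ^+ m else 0) by case: ifP.
  move=> A B; rewrite addrCA lerDl; exact: addr_ge0.
have E2 : \sum_(S : j.-tuple T | bad0 S) xx S ^+ m <= alpha * Q.
  by rewrite /Q mulrA; apply: base.
have E3 : forall k : 'I_h.+1, \sum_(S : j.-tuple T | cnd k S) xx S ^+ m <= (dl + dl) * Q.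
  move=> k.
  have [jk|kj] := leqP j k; last first.
    rewrite big_pred0; first by rewrite mulr_ge0 // addr_ge0 // ltW.
    by move=> S; rewrite /cnd leqNgt kj.
  set d := (k - m)%N.
  have kd : (k : nat) = (m + d)%N by rewrite subnKC // (leq_trans mj jk).
  have dh : (d <= h)%N by rewrite /d; apply: (leq_trans (leq_subr _ _)); rewrite -ltnS.
  set L := dl * nn * pp ^+ j.
  have L0 : 0 < L by apply: mulr_gt0; [exact: mulr_gt0 | exact: exprn_gt0].
  have Ld : 0 < L ^+ d by rewrite exprn_gt0.
  set bc := fun S : j.-tuple T => (#|[set t : k.-tuple T | all (fun y => y \in nbhd e S) t &&
          ~~ good e alpha beta h r i t]|)%:R : R.
  have S1 : \sum_(S : j.-tuple T | cnd k S) xx S ^+ m <=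
            \sum_(S : j.-tuple T) (L ^+ m + bc S / (beta * L ^+ d)).
    rewrite [X in X <= _]big_mkcond /=; apply: ler_sum => S _.
    have bc0 : 0 <= bc S by [].
    have Lm0 : 0 <= L ^+ m by rewrite exprn_ge0 // ltW.
    case: ifP => Hc; last by rewrite addr_ge0 // divr_ge0 // mulr_ge0 // ltW.
    apply: (le_trans (@thr (xx S) L m d (ler0n _ _) L0)); rewrite lerD2l -kd.
    rewrite invfM mulrA; apply: ler_wpM2r; first by rewrite invr_ge0 ltW.
    rewrite ler_pdivlMr // mulrC.
    move: Hc; rewrite /cnd jk /= -ltNge => Hc.
    have := cnt_split i k (nbhd e S).
    move/(congr1 (fun z : nat => z%:R : R)); rewrite natrD natrX -/(bc S) => Hs.
    move: Hc; rewrite -Hs; lra.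
  apply: (le_trans S1).
  rewrite big_split /= sum_const_tuples -mulr_suml.
  have S2 : \sum_(S : j.-tuple T) bc S <= gfun t * nn ^+ (k + j) * pp ^+ (k * j).
    have := @swap _ _ esym R j k (fun t => ~~ good e alpha beta h r i t).
    rewrite /= => ->.
    apply: IH; [exact: (leq_trans m1 mj) | exact: jk | by rewrite -ltnS].
  have A1 : nn ^+ j * L ^+ m = dl ^+ m * Q.
    rewrite /L /Q; move: (p_r R e r) (dl) => P D; rewrite !exprMn -exprM exprD; ring.
  have dh1 : (h.+1 = (h.+1 - d) + d)%N by rewrite subnK // ltnW.
  have A2 : gfun t * nn ^+ (k + j) * pp ^+ (k * j) / (beta * L ^+ d)
            = dl ^+ (h.+1 - d) * Q.
    rewrite /gfun -/dl kd /L /Q.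
    rewrite (natid1 m d j) (natid2 m d j) {1}dh1.
    have B0 : beta != 0 by rewrite gt_eqF.
    move: (p_r R e r) ppos (dl) dl0 (nn) n0 => P P0 D D0 N N0.
    rewrite !exprD !exprMn -!exprM.
    have [P1 D1 N1] : [/\ P != 0, D != 0 & N != 0] by rewrite !gt_eqF.
    field.
    by rewrite !expf_neq0.
  apply: (@le_trans _ _ (dl ^+ m * Q + dl ^+ (h.+1 - d) * Q)).
    rewrite A1 -A2 lerD2l; apply: ler_wpM2r; first by rewrite invr_ge0 mulr_ge0 // ltW.
    exact: S2.
  rewrite mulrDl; apply: lerD; apply: ler_wpM2r => //; apply: pow_le_self => //;
    [exact: ltW | exact: ltW | by rewrite subn_gt0].
apply: (le_trans E1).
apply: (le_trans (lerD E2 (ler_sum _ (fun k _ => E3 k)))).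
rewrite sumr_const card_ord -[(dl + dl) * Q *+ h.+1]mulr_natr -[t * _ * _]mulrA -/Q.
have -> : (dl + dl) * Q * h.+1%:R = t / 2 * Q.
  rewrite /dl; field; by rewrite addrC natr1 pnatr_eq0.
rewrite -mulrDl; apply: ler_wpM2r => //; lra.
Qed.

Lemma claim_mono i (e1 e2 : R) : e1 <= e2 -> Claim i e1 -> Claim i e2.
Proof.
move=> le H j m m1 mj jh; apply: (le_trans (H j m m1 mj jh)).
rewrite -!mulrA; apply: ler_wpM2r => //.
by rewrite mulr_ge0 // exprn_ge0 // ltW // npos.
Qed.

Hypotheses (b0 : 0 < beta) (b1 : beta < 1).

Lemma gfun_prop t : 0 < t -> t <= 1 -> 0 < gfun t /\ gfun t <= t / 2.
Proof.
move=> t0 t1; set dl := t / (4 * h.+1)%:R.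
have dl0 : 0 < dl by rewrite divr_gt0 // ltr0n muln_gt0.
have dlt : dl <= t / 4.
  rewrite /dl ler_pdivrMr ?ltr0n ?muln_gt0 // mulrAC ler_pdivlMr // natrM.
  apply: ler_wpM2l; first exact: ltW.
  have : 1 <= h.+1%:R :> R by rewrite ler1n.
  lra.
split; first by rewrite /gfun mulr_gt0 // exprn_gt0.
have dl1 : dl <= 1 by apply: (le_trans dlt); lra.
apply: (@le_trans _ _ dl); last by apply: (le_trans dlt); lra.
rewrite /gfun -/dl; apply: (@le_trans _ _ (dl ^+ h.+1)).
  by rewrite ler_piMl ?exprn_ge0 ?ltW.
by apply: pow_le_self => //; exact: ltW.
Qed.

Lemma iter_prop s t : 0 < t -> t <= 1 -> 0 < iter s gfun t /\ iter s gfun t <= t.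
Proof.
move=> t0 t1; elim: s => [|s [IH1 IH2]] /=; first by split.
have [g0 g1] := gfun_prop IH1 (le_trans IH2 t1).
split => //; apply: (le_trans g1); apply: (le_trans _ IH2); lra.
Qed.

Lemma levels i : 0 < alpha -> forall t, 0 < t -> t <= 1 -> alpha <= iter i gfun t -> Claim i t.
Proof.
move=> a0; elim: i => [|i IH] t t0 t1 /= hat.
  apply: (claim_mono hat); apply: base; [exact: ltW | exact: (le_trans hat)].
have [g0 g1] := gfun_prop t0 t1.
have g1' : gfun t <= 1 by apply: (le_trans g1); lra.
rewrite -iterS iterSr in hat.
have [i0 i1] := iter_prop i g0 g1'.
apply: step => //.
- by apply: (le_trans hat); apply: (le_trans i1).
- exact: ltW.
- apply: (le_trans hat); apply: (le_trans i1); apply: (le_trans g1); lra.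
- by apply: IH.
Qed.

Lemma sum_tuple1 (F : 1.-tuple T -> R) : \sum_(S : 1.-tuple T) F S = \sum_(v : T) F [tuple v].
Proof.
rewrite (reindex (fun v : T => [tuple v])) //.
exists (fun t : 1.-tuple T => thead t) => [v _|t _] //.
apply: val_inj; case: t => [[|a [|b s]] //= Hs].
Qed.

Lemma nbhd1 v : nbhd e [tuple v] = [set u | e v u].
Proof. by apply/setP => u; rewrite !inE /= andbT. Qed.

Hypothesis r0 : (0 < r)%N.

Lemma degsum : \sum_(v : T) (deg e v)%:R ^+ r = nn ^+ r.+1 * pp ^+ r.
Proof.
have n0 := npos.
set D := \sum_(v : T) (deg e v)%:R ^+ r.
have D0 : 0 <= D by rewrite sumr_ge0 // => v _; rewrite exprn_ge0.
have Hp : forall A : R, 0 <= A -> (A `^ r%:R^-1) ^+ r = A.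
  move=> A A0; rewrite -powR_mulrn ?powR_ge0 // -powRrM mulVf ?powRr1 //.
  by rewrite pnatr_eq0 -lt0n.
rewrite /p_r -/D exprMn Hp; last by rewrite mulr_ge0 // invr_ge0 ltW.
clear D0; move: n0 D; move: (nn) => N N0 D.
rewrite exprS exprVn; have M0 : N ^+ r != 0 by rewrite expf_neq0 // gt_eqF.
move: M0; move: (N ^+ r) => M M0; field; by rewrite M0 gt_eqF.
Qed.

Lemma total j : (0 < j)%N ->
  nn ^+ (j + r) * pp ^+ (j * r) <= \sum_(S : j.-tuple T) xx S ^+ r.
Proof.
move=> j0.
have n0 := npos.
have E1 : \sum_(S : j.-tuple T) xx S ^+ r = \sum_(t : r.-tuple T) xx t ^+ j.
  rewrite -(@swap _ _ esym R j r predT).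
  apply: eq_bigr => S _; rewrite (_ : [set t : r.-tuple T | _] =
    [set t : r.-tuple T | all (fun y => y \in nbhd e S) t]).
    by rewrite card_tuples_in natrX.
  by apply/setP => t; rewrite !inE andbT.
have E2 : \sum_(t : r.-tuple T) xx t = nn ^+ r.+1 * pp ^+ r.
  rewrite -degsum.
  under eq_bigr => t _ do rewrite -[xx t]expr1.
  rewrite -(@swap _ _ esym R 1 r predT) sum_tuple1.
  apply: eq_bigr => v _; rewrite (_ : [set t : r.-tuple T | _] =
    [set t : r.-tuple T | all (fun y => y \in nbhd e [tuple v]) t]).
    by rewrite card_tuples_in natrX nbhd1.
  by apply/setP => t; rewrite !inE andbT.
rewrite E1.
case: j j0 {E1} => // j _.
have PM := @power_mean R _ (fun t : r.-tuple T => xx t) j (fun t => ler0n _ _).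
rewrite E2 in PM.
rewrite (card_tuple r T) natrX in PM.
have K0 : 0 < nn ^+ r ^+ j by rewrite !exprn_gt0.
rewrite -(ler_pM2l K0); apply: le_trans PM.
have -> : nn ^+ r ^+ j * (nn ^+ (j.+1 + r) * pp ^+ (j.+1 * r)) = (nn ^+ r.+1 * pp ^+ r) ^+ j.+1.
  move: (nn) (pp) => N P.
  by rewrite exprMn -!exprM mulrA -exprD natid3 [(j.+1 * r)%N]mulnC.
by [].
Qed.
End Main.

Lemma all_good (R : realType) (T : finType) (e : rel T) (alpha beta : R) (h r : nat) :
  p_r R e r = 0 -> 0 <= beta ->
  forall i (S : seq T), (0 < size S <= h)%N -> good e alpha beta h r i S.
Proof.
move=> p0 b0; elim=> [|i IH] S /andP [s0 sh] /=.
  by rewrite p0 expr0n gtn_eqF // mulr0 mul0r.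
rewrite sh p0 expr0n gtn_eqF // mulr0 mul0r ler0n /=.
apply/forallP => k; apply/implyP => sk.
rewrite (_ : [set t : k.-tuple T | _] = [set t : k.-tuple T | all (fun y => y \in nbhd e S) t]).
  rewrite card_tuples_in natrX; apply: ler_piMl; first by rewrite exprn_ge0.
  by rewrite lerBlDr lerDl.
apply/setP => t; rewrite !inE; case: (all _ _) => //=.
apply: IH; rewrite size_tuple (leq_trans s0 sk) /=.
by rewrite -ltnS ltn_ord.
Qed.

Unset Implicit Arguments.
Theorem theorem3p2 (R : realType) (h r : nat) (beta : R) :
  (0 < r)%N -> (r <= h)%N -> 0 < beta -> beta < 1 ->
  exists alpha : R, 0 < alpha /\
    forall (T : finType) (e : rel T), symmetric e -> irreflexive e ->
    forall i j : nat, (1 <= i <= h)%N -> (r <= j <= h)%N ->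
      (1 - beta) * (#|T|%:R) ^+ (j + r) * (p_r R e r) ^+ (j * r) <=
        \sum_(S : j.-tuple T | good e alpha beta h r i S) (#|nbhd e S|%:R) ^+ r
      /\
      ((0 < #|T|)%N ->
       exists S : j.-tuple T, good e alpha beta h r i S /\
         powR (1 - beta) (r%:R^-1) * (p_r R e r) ^+ j * (#|T|%:R)
           <= (#|nbhd e S|%:R)).
Proof.
move=> r0 rh b0 b1.
have b1' : beta <= 1 by exact: ltW.
have [a0 a1] := iter_prop h b0 b1 h b0 b1'.
exists (iter h (gfun beta h) beta); split => // T e esym _ i j /andP [i1 ih] /andP [rj jh].
set alpha := iter h (gfun beta h) beta.
have j0 : (0 < j)%N by apply: leq_trans rj.
have [pp0|ppos] : p_r R e r = 0 \/ 0 < p_r R e r.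
  by have := p_ge0 R e r; rewrite le0r => /orP [/eqP ->|->]; [left|right].
-
  have allg := @all_good R T e alpha beta h r pp0 (ltW b0).
  split.
    rewrite pp0 expr0n muln_eq0 (gtn_eqF j0) (gtn_eqF r0) /= mulr0.
    by apply: sumr_ge0 => S _; rewrite exprn_ge0.
  case/card_gt0P => v _.
  exists [tuple of nseq j v]; split.
    by apply: allg; rewrite size_tuple j0.
  by rewrite pp0 expr0n (gtn_eqF j0) mulr0 mul0r.
have n0 := npos ppos.
set X := (#|T|%:R : R) ^+ (j + r) * p_r R e r ^+ (j * r).
have X0 : 0 <= X by rewrite mulr_ge0 // exprn_ge0 // ltW.
have P1 : (1 - beta) * X <= \sum_(S : j.-tuple T | good e alpha beta h r i S) (#|nbhd e S|%:R : R) ^+ r.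
  have HC : Claim e alpha beta h r i beta.
    apply: (levels esym ppos b0 b1 a0 b0 b1').
    have [g0 g1] := iter_prop h b0 b1 i b0 b1'.
    rewrite [X in X <= _](_ : _ = iter (h - i) (gfun beta h) (iter i (gfun beta h) beta));
      last by rewrite -iterD subnK.
    by have [_ ->] := iter_prop h b0 b1 (h - i) g0 (le_trans g1 b1').
  have Hb := HC j r r0 rj jh.
  have Ht := total esym ppos r0 j0.
  rewrite (bigID (fun S : j.-tuple T => good e alpha beta h r i S)) /= in Ht.
  move: Hb Ht; rewrite -/X -mulrA -/X.
  move: (\sum_(S | _) _) (\sum_(S | _) _) => A B; lra.
split; first by rewrite -mulrA.
move=> _.
set c := powR (1 - beta) r%:R^-1.
have c0 : 0 < c by rewrite /c powR_gt0 // subr_gt0.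
have cr : c ^+ r = 1 - beta.
  rewrite /c -powR_mulrn ?powR_ge0 // -powRrM mulVf ?powRr1 ?subr_ge0 //.
  by rewrite pnatr_eq0 -lt0n.
case: (pickP (fun S : j.-tuple T => good e alpha beta h r i S &&
    (c * p_r R e r ^+ j * #|T|%:R <= #|nbhd e S|%:R))) => [S /andP [HS1 HS2]|none].
  by exists S.
exfalso.
have [v _] : exists v : T, true.
  by move: n0; rewrite ltr0n => /card_gt0P [v _]; exists v.
set Y := c * p_r R e r ^+ j * #|T|%:R.
have Y0 : 0 < Y by rewrite !mulr_gt0 // exprn_gt0.
have L : \sum_(S : j.-tuple T | good e alpha beta h r i S) (#|nbhd e S|%:R : R) ^+ r
         < \sum_(S : j.-tuple T) Y ^+ r.
  rewrite big_mkcond /=; apply: ltr_sum.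
    by apply/hasP; exists [tuple of nseq j v]; rewrite ?mem_index_enum.
  move=> S _; case: ifP => Hg.
    move: (none S); rewrite Hg /= => /negbT; rewrite -ltNge => H.
    by rewrite ltrXn2r // gtn_eqF.
  by rewrite exprn_gt0.
have EY : (#|T|%:R : R) ^+ j * Y ^+ r = (1 - beta) * X.
  rewrite /Y /X -cr; move: (p_r R e r) (#|T|%:R : R) => P N.
  by rewrite !exprMn -exprM exprD; ring.
rewrite sum_const_tuples EY in L.
by move: (lt_le_trans L P1); rewrite ltxx.
Qed.
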